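(* Let $0<L<\infty$, $\varphi\in(0,1)$, $\kappa_f,\kappa_s,h_v,c_{p,f},\dot m_c,A_c>0$, $T_b,q_{HG}\in\mathbb R$, and consider the boundary value problem for $(T_f,T_s)$ on $[0,L]$: $$-\varphi\kappa_fT_f''+c_{p,f}\frac{\dot m_c}{A_c}T_f'=h_v(T_s-T_f),\qquad (1-\varphi)\kappa_sT_s''=h_v(T_s-T_f)\quad\text{on }(0,L),$$ $$T_f(0)=T_s(0)=T_b,\quad (1-\varphi)\kappa_sT_s'(L)=q_{HG}-c_{p,f}\frac{\dot m_c}{A_c}(T_s(L)-T_f(L)),\quad T_f'(L)=\frac{h_vA_c}{c_{p,f}\dot m_c}(T_s(L)-T_f(L)).$$ Then: (1) this problem has a unique solution; (2) if $q_{HG}>0$, then $T_s-T_f$ is positive, $T_f$ is monotonically increasing with $T_f(y)\ge T_b$ for $y\in[0,L]$, and $T_s$ is monotonically increasing with $T_s(y)\ge T_b$ for $y\in[0,L]$; (3) if $q_{HG}=0$, then $T_f(y)=T_s(y)=T_b$ for all $y\in[0,L]$. *)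

(* Defs.v *)
From Stdlib Require Import Reals.
From Coquelicot Require Import Coquelicot.
Open Scope R_scope.

(* The unknowns are functions R -> R; only their behaviour on
   [0, L] matters.  They are required to be twice differentiable at every
   point of [0, L] (so that T'(L) and the second derivatives make sense). *)
Definition is_solution (L phi kf ks hv cpf mc Ac Tb qHG : R)
    (Tf Ts : R -> R) : Prop :=
  (forall y, 0 <= y <= L ->
     ex_derive Tf y /\ ex_derive (Derive Tf) y /\
     ex_derive Ts y /\ ex_derive (Derive Ts) y) /\
  (forall y, 0 < y < L ->
     - phi * kf * Derive_n Tf 2 y + cpf * (mc / Ac) * Derive Tf y
       = hv * (Ts y - Tf y) /\
     (1 - phi) * ks * Derive_n Ts 2 y = hv * (Ts y - Tf y)) /\
  Tf 0 = Tb /\ Ts 0 = Tb /\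
  (1 - phi) * ks * Derive Ts L = qHG - cpf * (mc / Ac) * (Ts L - Tf L) /\
  Derive Tf L = (hv * Ac) / (cpf * mc) * (Ts L - Tf L).

(* Main.v *)
Require Import Defs.
From Stdlib Require Import Reals Lra.
From Coquelicot Require Import Coquelicot.
Open Scope R_scope.

Lemma sign_pos f x l : is_derive f x l -> 0 < l ->
  exists d, 0 < d /\ forall t, 0 < t < d -> f x < f (x + t) /\ f (x - t) < f x.
Proof.
  intros H Hl. apply is_derive_Reals in H.
  destruct (H (l/2)) as [d Hd]; [lra|].
  exists d; split; [apply cond_pos|]. intros t Ht.
  split.
  - assert (Ht0 : t <> 0) by lra.
    assert (Ha : Rabs t < d) by (rewrite Rabs_right; lra).
    specialize (Hd t Ht0 Ha).
    apply Rabs_def2 in Hd. destruct Hd as [_ Hd].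
    assert (0 < (f (x + t) - f x) / t) by lra.
    assert (0 < (f (x + t) - f x)).
    { replace (f (x+t) - f x) with ((f (x + t) - f x) / t * t) by (field; lra).
      apply Rmult_lt_0_compat; lra. }
    lra.
  - assert (Ht0 : -t <> 0) by lra.
    assert (Ha : Rabs (-t) < d) by (rewrite Rabs_left; lra).
    specialize (Hd (-t) Ht0 Ha).
    apply Rabs_def2 in Hd. destruct Hd as [_ Hd].
    assert (0 < (f (x + - t) - f x) / (-t)) by lra.
    assert (0 < -(f (x + - t) - f x)).
    { replace (-(f (x + - t) - f x)) with ((f (x + - t) - f x) / (-t) * t) by (field; lra).
      apply Rmult_lt_0_compat; lra. }
    replace (x - t) with (x + - t) by ring. lra.
Qed.

Lemma sign_neg f x l : is_derive f x l -> l < 0 ->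
  exists d, 0 < d /\ forall t, 0 < t < d -> f (x + t) < f x /\ f x < f (x - t).
Proof.
  intros H Hl.
  assert (H' : is_derive (fun y => - f y) x (- l)) by (apply (is_derive_opp f); exact H).
  destruct (sign_pos _ _ _ H') as [d [Hd Ht]]; [lra|].
  exists d; split; auto. intros t Ht'. specialize (Ht t Ht'). lra.
Qed.

Lemma mvt f df x y : x < y -> (forall t, x <= t <= y -> is_derive f t (df t)) ->
  exists z, x < z < y /\ f y - f x = df z * (y - x).
Proof.
  intros Hxy H. destruct (MVT_cor2 f df x y Hxy) as [z [Hz1 Hz2]].
  - intros t Ht. apply is_derive_Reals. auto.
  - exists z; auto.
Qed.

Lemma mono f df x y : x <= y -> (forall t, x <= t <= y -> is_derive f t (df t)) ->
  (forall t, x < t < y -> 0 <= df t) -> f x <= f y.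
Proof.
  intros Hxy H Hp. destruct (Req_dec x y) as [->|Hne]; [lra|].
  destruct (mvt f df x y) as [z [Hz Heq]]; [lra|auto|].
  specialize (Hp z Hz). nra.
Qed.

Lemma der_cont f x l : is_derive f x l -> continuity_pt f x.
Proof. intro H. apply derivable_continuous_pt. exists l. apply is_derive_Reals. exact H. Qed.

Lemma der_expu f df k K x : is_derive f x df ->
  is_derive (fun t => exp (k * t) * (f t - K)) x (exp (k * x) * (k * (f x - K) + df)).
Proof.
  intro H. auto_derive.
  - exists df. exact H.
  - replace (Derive (fun y : R => f y) x) with df; [ring|]. symmetry. apply is_derive_unique. exact H.
Qed.

Definition pkg (L a b c h q : R) (Tf f1 f2 Ts s1 s2 : R -> R) : Prop :=
 (forall y, 0 <= y <= L -> is_derive Tf y (f1 y) /\ is_derive f1 y (f2 y) /\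
                           is_derive Ts y (s1 y) /\ is_derive s1 y (s2 y)) /\
 (forall y, 0 < y < L -> - a * f2 y + c * f1 y = h * (Ts y - Tf y) /\
                         b * s2 y = h * (Ts y - Tf y)) /\
 Tf 0 = Ts 0 /\
 b * s1 L = q - c * (Ts L - Tf L) /\ f1 L = h / c * (Ts L - Tf L).

Lemma pkg_opp L a b c h q Tf f1 f2 Ts s1 s2 :
  pkg L a b c h q Tf f1 f2 Ts s1 s2 ->
  pkg L a b c h (-q) (fun y => - Tf y) (fun y => - f1 y) (fun y => - f2 y)
                     (fun y => - Ts y) (fun y => - s1 y) (fun y => - s2 y).
Proof.
  intros [Hd [Ho [H0 [H1 H2]]]]. split; [|split; [|split; [|split]]].
  - intros y Hy; destruct (Hd y Hy) as (A&B&C&D).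
    refine (conj _ (conj _ (conj _ _))).
    + apply (is_derive_opp Tf). auto.
    + apply (is_derive_opp f1). auto.
    + apply (is_derive_opp Ts). auto.
    + apply (is_derive_opp s1). auto.
  - intros. destruct (Ho y H) as [A B]. split; lra.
  - lra.
  - lra.
  - rewrite H2. ring.
Qed.

Lemma pkg_sub L a b c h q q' Tf f1 f2 Ts s1 s2 Tf' f1' f2' Ts' s1' s2' :
  pkg L a b c h q Tf f1 f2 Ts s1 s2 ->
  pkg L a b c h q' Tf' f1' f2' Ts' s1' s2' ->
  pkg L a b c h (q - q') (fun y => Tf y - Tf' y) (fun y => f1 y - f1' y) (fun y => f2 y - f2' y)
                     (fun y => Ts y - Ts' y) (fun y => s1 y - s1' y) (fun y => s2 y - s2' y).
Proof.
  intros [Hd [Ho [H0 [H1 H2]]]] [Hd' [Ho' [H0' [H1' H2']]]]. split; [|split; [|split; [|split]]].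
  - intros y Hy; destruct (Hd y Hy) as (A&B&C&D); destruct (Hd' y Hy) as (A'&B'&C'&D').
    refine (conj _ (conj _ (conj _ _))).
    + apply (is_derive_minus Tf Tf'); auto.
    + apply (is_derive_minus f1 f1'); auto.
    + apply (is_derive_minus Ts Ts'); auto.
    + apply (is_derive_minus s1 s1'); auto.
  - intros. destruct (Ho y H) as [A B]. destruct (Ho' y H) as [A' B']. split; lra.
  - lra.
  - lra.
  - rewrite H2, H2'. ring.
Qed.

Section Main.
Variables (L a b c h : R).
Hypotheses (hL : 0 < L) (ha : 0 < a) (hb : 0 < b) (hc : 0 < c) (hh : 0 < h).

Lemma gl_mono q Tf f1 f2 Ts s1 s2 K : pkg L a b c h q Tf f1 f2 Ts s1 s2 ->
  (forall t, 0 <= t <= L -> h * (Ts t - Tf t) <= c * K) ->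
  forall y, 0 <= y <= L -> exp (-(c/a) * y) * (f1 y - K) <= exp (-(c/a) * L) * (f1 L - K).
Proof.
  intros [Hd [Ho _]] HK y Hy.
  apply (mono (fun t => exp (-(c/a) * t) * (f1 t - K))
              (fun t => exp (-(c/a) * t) * (-(c/a) * (f1 t - K) + f2 t))); [lra| |].
  - intros t Ht. apply der_expu. apply Hd. lra.
  - intros t Ht. apply Rmult_le_pos; [left; apply exp_pos|].
    destruct (Ho t ltac:(lra)) as [A _].
    specialize (HK t ltac:(lra)).
    assert (E : a * (-(c/a) * (f1 t - K) + f2 t) = -c * (f1 t - K) + a * f2 t) by (field; lra).
    assert (0 <= a * (-(c/a) * (f1 t - K) + f2 t)) by lra.
    nra.
Qed.

Lemma gl_mono' q Tf f1 f2 Ts s1 s2 K : pkg L a b c h q Tf f1 f2 Ts s1 s2 ->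
  (forall t, 0 <= t <= L -> c * K <= h * (Ts t - Tf t)) ->
  forall y, 0 <= y <= L -> exp (-(c/a) * L) * (f1 L - K) <= exp (-(c/a) * y) * (f1 y - K).
Proof.
  intros P HK y Hy.
  pose proof (gl_mono _ _ _ _ _ _ _ (-K) (pkg_opp _ _ _ _ _ _ _ _ _ _ _ _ P)) as G.
  assert (G' : exp (-(c/a) * y) * (- f1 y - - K) <= exp (-(c/a) * L) * (- f1 L - - K)).
  { apply G; auto. intros t Ht. specialize (HK t Ht). lra. }
  lra.
Qed.

Lemma gl_le q Tf f1 f2 Ts s1 s2 M : pkg L a b c h q Tf f1 f2 Ts s1 s2 ->
  (forall t, 0 <= t <= L -> Ts t - Tf t <= M) ->
  forall y, 0 <= y <= L -> f1 y <= h / c * M.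
Proof.
  intros P HM y Hy.
  pose proof (gl_mono _ _ _ _ _ _ _ (h / c * M) P) as G.
  assert (G' : exp (-(c/a) * y) * (f1 y - h / c * M) <= exp (-(c/a) * L) * (f1 L - h / c * M)).
  { apply G; auto. intros t Ht. specialize (HM t Ht).
    replace (c * (h / c * M)) with (h * M) by (field; lra). nra. }
  destruct P as [_ [_ [_ [_ H2]]]].
  assert (HL' := HM L ltac:(lra)).
  assert (f1 L - h / c * M <= 0).
  { rewrite H2. assert (0 < h / c) by (apply Rdiv_lt_0_compat; lra). nra. }
  assert (0 < exp (-(c/a) * L)) by apply exp_pos.
  assert (0 < exp (-(c/a) * y)) by apply exp_pos.
  nra.
Qed.

Lemma gl_ge q Tf f1 f2 Ts s1 s2 m : pkg L a b c h q Tf f1 f2 Ts s1 s2 ->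
  (forall t, 0 <= t <= L -> m <= Ts t - Tf t) ->
  forall y, 0 <= y <= L -> h / c * m <= f1 y.
Proof.
  intros P HM y Hy.
  pose proof (gl_le _ _ _ _ _ _ _ (-m) (pkg_opp _ _ _ _ _ _ _ _ _ _ _ _ P)) as G.
  assert (- f1 y <= h / c * - m).
  { apply G; auto. intros t Ht. specialize (HM t Ht). lra. }
  lra.
Qed.

End Main.

Section MP.
Variables (L a b c h : R).
Hypotheses (hL : 0 < L) (ha : 0 < a) (hb : 0 < b) (hc : 0 < c) (hh : 0 < h).

Lemma pkg_dD q Tf f1 f2 Ts s1 s2 : pkg L a b c h q Tf f1 f2 Ts s1 s2 ->
  forall t, 0 <= t <= L -> is_derive (fun y => Ts y - Tf y) t (s1 t - f1 t).
Proof.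
  intros [Hd _] t Ht. destruct (Hd t Ht) as (A&B&C&D).
  apply (is_derive_minus Ts Tf); auto.
Qed.

Lemma pkg_dk q Tf f1 f2 Ts s1 s2 : pkg L a b c h q Tf f1 f2 Ts s1 s2 ->
  forall t, 0 <= t <= L -> is_derive (fun y => s1 y - f1 y) t (s2 t - f2 t).
Proof.
  intros [Hd _] t Ht. destruct (Hd t Ht) as (A&B&C&D).
  apply (is_derive_minus s1 f1); auto.
Qed.

Lemma pkg_contD q Tf f1 f2 Ts s1 s2 : pkg L a b c h q Tf f1 f2 Ts s1 s2 ->
  forall t, 0 <= t <= L -> continuity_pt (fun y => Ts y - Tf y) t.
Proof.
  intros P t Ht. eapply der_cont. apply (pkg_dD _ _ _ _ _ _ _ P t Ht).
Qed.

Lemma MP q Tf f1 f2 Ts s1 s2 : q <= 0 -> pkg L a b c h q Tf f1 f2 Ts s1 s2 ->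
  forall y, 0 <= y <= L -> Ts y - Tf y <= 0.
Proof.
  intros Hq P.
  pose (D := fun y => Ts y - Tf y).
  destruct (continuity_ab_maj D 0 L) as [y0 [Hmax Hy0]]; [lra| apply (pkg_contD _ _ _ _ _ _ _ P)|].
  destruct (Rle_dec (D y0) 0) as [Hle|Hgt].
  { intros y Hy. eapply Rle_trans; [apply (Hmax y Hy)|exact Hle]. }
  exfalso. apply Rnot_le_lt in Hgt.
  set (M := D y0) in *.
  assert (Hf1 : forall t, 0 <= t <= L -> f1 t <= h / c * M).
  { eapply (gl_le L a b c h); eauto. }
  pose proof (pkg_dD _ _ _ _ _ _ _ P) as HdD.
  destruct P as [Hd [Ho [H0 [H1 H2]]]].
  destruct (Req_dec y0 0) as [E0|N0].
  { unfold M, D in Hgt. rewrite E0, H0 in Hgt. lra. }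
  destruct (Req_dec y0 L) as [EL|NL].
  { assert (Hneg : s1 L - f1 L < 0).
    { unfold M, D in Hgt. rewrite EL in Hgt.
      assert (0 < h / c) by (apply Rdiv_lt_0_compat; lra).
      assert (b * s1 L < 0) by nra.
      assert (s1 L < 0) by nra.
      assert (0 < f1 L) by (rewrite H2; nra). lra. }
    destruct (sign_neg _ _ _ (HdD L ltac:(lra)) Hneg) as [d [Hd0 Hs]].
    set (t := Rmin d L / 2).
    assert (0 < Rmin d L) by (apply Rmin_pos; lra).
    assert (Rmin d L <= d) by apply Rmin_l.
    assert (Rmin d L <= L) by apply Rmin_r.
    destruct (Hs t ltac:(unfold t; lra)) as [_ Hs2].
    specialize (Hmax (L - t) ltac:(unfold t; lra)).
    unfold M, D in *; rewrite EL in *; cbv beta in *. lra. }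
  assert (Hin : 0 < y0 < L) by lra.
  destruct (total_order_T (s1 y0 - f1 y0) 0) as [[Hlt|Heq]|Hpos].
  - destruct (sign_neg _ _ _ (HdD y0 ltac:(lra)) Hlt) as [d [Hd0 Hs]].
    set (t := Rmin d y0 / 2).
    assert (0 < Rmin d y0) by (apply Rmin_pos; lra).
    assert (Rmin d y0 <= d) by apply Rmin_l.
    assert (Rmin d y0 <= y0) by apply Rmin_r.
    destruct (Hs t ltac:(unfold t; lra)) as [_ Hs2].
    specialize (Hmax (y0 - t) ltac:(unfold t; lra)). unfold M, D in *; cbv beta in *. lra.
  - assert (Hk : 0 < s2 y0 - f2 y0).
    { destruct (Ho y0 Hin) as [A B]. specialize (Hf1 y0 ltac:(lra)).
      assert (c * (h / c * M) = h * M) by (field; lra).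
      unfold M, D in *.
      assert (c * f1 y0 <= h * (Ts y0 - Tf y0)) by nra.
      assert (a * f2 y0 <= 0) by nra.
      assert (f2 y0 <= 0) by nra.
      assert (0 < s2 y0) by nra. lra. }
    destruct (sign_pos _ _ _ (pkg_dk _ _ _ _ _ _ _ (conj Hd (conj Ho (conj H0 (conj H1 H2)))) y0 ltac:(lra)) Hk)
      as [d [Hd0 Hs]].
    set (y1 := y0 + Rmin d (L - y0) / 2).
    assert (0 < Rmin d (L - y0)) by (apply Rmin_pos; lra).
    assert (Rmin d (L - y0) <= d) by apply Rmin_l.
    assert (Rmin d (L - y0) <= L - y0) by apply Rmin_r.
    destruct (mvt D (fun t => s1 t - f1 t) y0 y1) as [z [Hz Hmv]].
    { unfold y1; lra. }
    { intros t Ht. apply HdD. unfold y1 in Ht. lra. }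
    destruct (Hs (z - y0) ltac:(unfold y1 in Hz; lra)) as [Hs1 _].
    replace (y0 + (z - y0)) with z in Hs1 by ring.
    specialize (Hmax y1 ltac:(unfold y1; lra)).
    assert (0 < (s1 z - f1 z) * (y1 - y0)) by (apply Rmult_lt_0_compat; lra).
    unfold M, D in *; cbv beta in *. lra.
  - destruct (sign_pos _ _ _ (HdD y0 ltac:(lra)) Hpos) as [d [Hd0 Hs]].
    set (t := Rmin d (L - y0) / 2).
    assert (0 < Rmin d (L - y0)) by (apply Rmin_pos; lra).
    assert (Rmin d (L - y0) <= d) by apply Rmin_l.
    assert (Rmin d (L - y0) <= L - y0) by apply Rmin_r.
    destruct (Hs t ltac:(unfold t; lra)) as [Hs1 _].
    specialize (Hmax (y0 + t) ltac:(unfold t; lra)). unfold M, D in *; cbv beta in *. lra.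
Qed.

End MP.

Section P2.
Variables (L a b c h : R).
Hypotheses (hL : 0 < L) (ha : 0 < a) (hb : 0 < b) (hc : 0 < c) (hh : 0 < h).

Lemma MPneg q Tf f1 f2 Ts s1 s2 : 0 <= q -> pkg L a b c h q Tf f1 f2 Ts s1 s2 ->
  forall y, 0 <= y <= L -> 0 <= Ts y - Tf y.
Proof.
  intros Hq P y Hy.
  assert (- Ts y - - Tf y <= 0).
  { apply (MP L a b c h hL ha hb hc hh (-q) (fun y => - Tf y) (fun y => - f1 y) (fun y => - f2 y)
                     (fun y => - Ts y) (fun y => - s1 y) (fun y => - s2 y)); auto; [lra|].
    apply pkg_opp; auto. }
  lra.
Qed.

Lemma Zlem Tf f1 f2 Ts s1 s2 : pkg L a b c h 0 Tf f1 f2 Ts s1 s2 ->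
  forall y, 0 <= y <= L -> Tf y = Tf 0 /\ Ts y = Tf 0.
Proof.
  intros P.
  assert (HD1 := MP L a b c h hL ha hb hc hh 0 _ _ _ _ _ _ (Rle_refl 0) P).
  assert (HD2 := MPneg 0 _ _ _ _ _ _ (Rle_refl 0) P).
  assert (Hf : forall t, 0 <= t <= L -> f1 t = 0).
  { intros t Ht.
    assert (A : f1 t <= h / c * 0) by (eapply (gl_le L a b c h); eauto).
    assert (B : h / c * 0 <= f1 t) by (eapply (gl_ge L a b c h); eauto).
    lra. }
  assert (HTf : forall y, 0 <= y <= L -> Tf y = Tf 0).
  { intros y Hy. destruct (Req_dec y 0) as [->|N]; [reflexivity|].
    destruct P as [Hd _].
    destruct (mvt Tf f1 0 y) as [z [Hz E]]; [lra| intros t Ht; apply Hd; lra|].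
    rewrite (Hf z ltac:(lra)) in E. lra. }
  intros y Hy. split; auto. specialize (HD1 y Hy). specialize (HD2 y Hy).
  rewrite <- (HTf y Hy). lra.
Qed.

Lemma P2lem q Tf f1 f2 Ts s1 s2 : 0 < q -> pkg L a b c h q Tf f1 f2 Ts s1 s2 ->
  (forall y, 0 < y <= L -> Ts y - Tf y > 0) /\
  (forall x y, 0 <= x -> x <= y -> y <= L -> Tf x <= Tf y) /\
  (forall x y, 0 <= x -> x <= y -> y <= L -> Ts x <= Ts y).
Proof.
  intros Hq P.
  assert (HD := MPneg q _ _ _ _ _ _ ltac:(lra) P).
  assert (Hf : forall t, 0 <= t <= L -> 0 <= f1 t).
  { intros t Ht.
    assert (B : h / c * 0 <= f1 t) by (eapply (gl_ge L a b c h); eauto). lra. }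
  pose proof (pkg_dD L a b c h q _ _ _ _ _ _ P) as HdD.
  pose proof (pkg_dk L a b c h q _ _ _ _ _ _ P) as Hdk.
  pose proof P as P'.
  destruct P' as [Hd [Ho [H0 [H1 H2]]]].
  assert (HDL : Ts L - Tf L > 0).
  { destruct (Rle_dec (Ts L - Tf L) 0) as [Hle|Hgt]; [|lra]. exfalso.
    assert (E : Ts L - Tf L = 0) by (specialize (HD L ltac:(lra)); lra).
    assert (Hp : 0 < s1 L - f1 L).
    { rewrite H2, E. rewrite E in H1.
      assert (b * s1 L > 0) by lra.
      assert (s1 L > 0) by nra. lra. }
    destruct (sign_pos _ _ _ (HdD L ltac:(lra)) Hp) as [d [Hd0 Hs]].
    set (t := Rmin d L / 2).
    assert (0 < Rmin d L) by (apply Rmin_pos; lra).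
    assert (Rmin d L <= d) by apply Rmin_l.
    assert (Rmin d L <= L) by apply Rmin_r.
    destruct (Hs t ltac:(unfold t; lra)) as [_ Hs2].
    specialize (HD (L - t) ltac:(unfold t; lra)). cbv beta in *. lra. }
  split; [|split].
  - intros y Hy. destruct (Req_dec y L) as [->|NL]; [exact HDL|].
    destruct (Rle_dec (Ts y - Tf y) 0) as [Hle|Hgt]; [|lra]. exfalso.
    assert (E : Ts y - Tf y = 0) by (specialize (HD y ltac:(lra)); lra).
    destruct (total_order_T (s1 y - f1 y) 0) as [[Hlt|Heq]|Hpos].
    + destruct (sign_neg _ _ _ (HdD y ltac:(lra)) Hlt) as [d [Hd0 Hs]].
      set (t := Rmin d (L - y) / 2).
      assert (0 < Rmin d (L - y)) by (apply Rmin_pos; lra).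
      assert (Rmin d (L - y) <= d) by apply Rmin_l.
      assert (Rmin d (L - y) <= L - y) by apply Rmin_r.
      destruct (Hs t ltac:(unfold t; lra)) as [Hs1 _].
      specialize (HD (y + t) ltac:(unfold t; lra)). cbv beta in *. lra.
    + destruct (Req_dec (f1 y) 0) as [F0|F0].
      * assert (G' : exp (-(c/a) * L) * (f1 L - 0) <= exp (-(c/a) * y) * (f1 y - 0)).
        { eapply (gl_mono' L a b c h); eauto; try lra. intros t Ht. specialize (HD t Ht). nra. }
        rewrite F0 in G'.
        assert (0 < exp (-(c/a) * L)) by apply exp_pos.
        assert (f1 L <= 0) by nra.
        rewrite H2 in *.
        assert (0 < h / c) by (apply Rdiv_lt_0_compat; lra).
        nra.
      * assert (Hf1 : 0 < f1 y) by (specialize (Hf y ltac:(lra)); lra).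
        assert (Hk : s2 y - f2 y < 0).
        { destruct (Ho y ltac:(lra)) as [A B]. rewrite E in A, B.
          assert (s2 y = 0) by nra.
          assert (a * f2 y > 0) by nra.
          assert (f2 y > 0) by nra. lra. }
        destruct (sign_neg _ _ _ (Hdk y ltac:(lra)) Hk) as [d [Hd0 Hs]].
        set (y1 := y + Rmin d (L - y) / 2).
        assert (0 < Rmin d (L - y)) by (apply Rmin_pos; lra).
        assert (Rmin d (L - y) <= d) by apply Rmin_l.
        assert (Rmin d (L - y) <= L - y) by apply Rmin_r.
        destruct (mvt (fun t => Ts t - Tf t) (fun t => s1 t - f1 t) y y1) as [z [Hz Hmv]].
        { unfold y1; lra. }
        { intros t Ht. apply HdD. unfold y1 in Ht. lra. }
        destruct (Hs (z - y) ltac:(unfold y1 in Hz; lra)) as [Hs1 _].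
        replace (y + (z - y)) with z in Hs1 by ring.
        specialize (HD y1 ltac:(unfold y1; lra)).
        assert ((s1 z - f1 z) * (y1 - y) < 0).
        { assert (0 < y1 - y) by lra. cbv beta in *. nra. }
        cbv beta in *. lra.
    + destruct (sign_pos _ _ _ (HdD y ltac:(lra)) Hpos) as [d [Hd0 Hs]].
      set (t := Rmin d y / 2).
      assert (0 < Rmin d y) by (apply Rmin_pos; lra).
      assert (Rmin d y <= d) by apply Rmin_l.
      assert (Rmin d y <= y) by apply Rmin_r.
      destruct (Hs t ltac:(unfold t; lra)) as [_ Hs2].
      specialize (HD (y - t) ltac:(unfold t; lra)). cbv beta in *. lra.
  - intros x y Hx Hxy HyL. apply (mono Tf f1); auto.
    + intros t Ht. apply Hd. lra.
    + intros t Ht. apply Hf. lra.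
  -
    assert (Hs0 : 0 <= s1 0).
    { destruct (Rle_dec 0 (s1 0 - f1 0)) as [Hle|Hlt].
      - specialize (Hf 0 ltac:(lra)). lra.
      - exfalso. apply Rnot_le_lt in Hlt.
        destruct (sign_neg _ _ _ (HdD 0 ltac:(lra)) Hlt) as [d [Hd0 Hs]].
        set (t := Rmin d L / 2).
        assert (0 < Rmin d L) by (apply Rmin_pos; lra).
        assert (Rmin d L <= d) by apply Rmin_l.
        assert (Rmin d L <= L) by apply Rmin_r.
        destruct (Hs t ltac:(unfold t; lra)) as [Hs1 _].
        specialize (HD (0 + t) ltac:(unfold t; lra)). cbv beta in *. lra. }
    assert (Hs : forall t, 0 <= t <= L -> 0 <= s1 t).
    { intros t Ht. assert (s1 0 <= s1 t); [|lra].
      apply (mono s1 s2); [lra| |].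
      - intros u Hu. apply Hd. lra.
      - intros u Hu. destruct (Ho u ltac:(lra)) as [_ B].
        specialize (HD u ltac:(lra)). nra. }
    intros x y Hx Hxy HyL. apply (mono Ts s1); auto.
    + intros t Ht. apply Hd. lra.
    + intros t Ht. apply Hs. lra.
Qed.

End P2.

Lemma sol_pkg (L phi kf ks hv cpf mc Ac Tb qHG : R) Tf Ts :
  0 < cpf -> 0 < mc -> 0 < Ac ->
  is_solution L phi kf ks hv cpf mc Ac Tb qHG Tf Ts ->
  pkg L (phi*kf) ((1-phi)*ks) (cpf*(mc/Ac)) hv qHG Tf (Derive Tf) (Derive (Derive Tf))
      Ts (Derive Ts) (Derive (Derive Ts)) /\ Tf 0 = Tb /\ Ts 0 = Tb.
Proof.
  intros hcpf hmc hAc [Hd [Ho [H0 [H0' [H1 H2]]]]].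
  split; [|split; auto].
  split; [|split; [|split; [|split]]].
  - intros y Hy. destruct (Hd y Hy) as (A&B&C&D).
    refine (conj _ (conj _ (conj _ _))); apply Derive_correct; auto.
  - intros y Hy. destruct (Ho y Hy) as [A B]. change (Derive_n Tf 2 y) with (Derive (Derive Tf) y) in A. change (Derive_n Ts 2 y) with (Derive (Derive Ts) y) in B. split; [rewrite <- A; ring | exact B].
  - congruence.
  - lra.
  - rewrite H2. f_equal. field. repeat split; apply Rgt_not_eq; lra.
Qed.

Definition pc (a b c h x : R) := a*b*x^3 - b*c*x^2 - h*(a+b)*x + h*c.

Lemma pc_cont a b c h : continuity (pc a b c h).
Proof. unfold pc. reg. Qed.

Lemma roots a b c h : 0 < a -> 0 < b -> 0 < c -> 0 < h ->
  exists l1 l2 l3, l1 < 0 /\ 0 < l2 /\ l2 < c / a /\ c / a < l3 /\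
    pc a b c h l1 = 0 /\ pc a b c h l2 = 0 /\ pc a b c h l3 = 0.
Proof.
  intros ha hb hc hh.
  assert (P0 : pc a b c h 0 = h * c) by (unfold pc; ring).
  assert (Pca : pc a b c h (c / a) = - h * b * c / a) by (unfold pc; field; lra).
  assert (hca : 0 < c / a) by (apply Rdiv_lt_0_compat; lra).
  assert (Pca' : pc a b c h (c / a) < 0).
  { rewrite Pca. assert (0 < h * b * c / a). { apply Rdiv_lt_0_compat; [|lra]. 
      apply Rmult_lt_0_compat; [apply Rmult_lt_0_compat|]; lra. } lra. }
  assert (hhc : 0 < h * c) by nra.
  set (T := 1 + (h*(a+b) + h*c)/(a*b)).
  assert (hab : 0 < a * b) by nra.
  assert (HT1 : 0 < (h*(a+b) + h*c)/(a*b)) by (apply Rdiv_lt_0_compat; nra).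
  assert (HT2 : a*b*T = a*b + (h*(a+b) + h*c)) by (unfold T; field; lra).
  assert (PT : pc a b c h (-T) < 0).
  { unfold pc.
    assert (0 <= T*T) by nra.
    assert (0 <= (a*b*T - (h*(a+b) + h*c))*(T*T)) by (apply Rmult_le_pos; lra).
    assert (a*b*T*(T*T) >= (h*(a+b) + h*c)*(T*T)) by lra.
    assert (T >= 1) by (unfold T; lra).
    assert (T*T >= T) by nra.
    assert (0 < h*(a+b)) by nra.
    assert (h*(a+b)*(T*T) >= h*(a+b)*T) by nra.
    assert (h*c*(T*T) >= h*c) by nra.
    assert (b*c*(T*T) > 0) by nra.
    replace ((-T)^3) with (-(T*(T*T))) by ring.
    replace ((-T)^2) with (T*T) by ring. nra. }
  set (U := 1 + c/a + (b*c + h*(a+b))/(a*b)).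
  assert (HU1 : 0 < (b*c + h*(a+b))/(a*b)) by (apply Rdiv_lt_0_compat; nra).
  assert (HU2 : a*b*U = a*b + b*c + (b*c + h*(a+b))) by (unfold U; field; lra).
  assert (PU : 0 < pc a b c h U).
  { unfold pc.
    assert (0 <= U*U) by nra.
    assert (0 < b*c) by nra.
    assert (0 <= a*b*U - (b*c + h*(a+b))) by lra.
    assert (0 <= (a*b*U - (b*c + h*(a+b)))*(U*U)) by (apply Rmult_le_pos; lra).
    assert (a*b*U*(U*U) >= (b*c + h*(a+b))*(U*U)) by lra.
    assert (U >= 1) by (unfold U; lra).
    assert (U*U >= U) by nra.
    assert (0 < h*(a+b)) by nra.
    assert (h*(a+b)*(U*U) >= h*(a+b)*U) by nra.
    replace (U^3) with (U*(U*U)) by ring.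
    replace (U^2) with (U*U) by ring. nra. }
  assert (T >= 1) by (unfold T; lra).
  assert (U >= 1 + c / a) by (unfold U; lra).
  destruct (IVT (pc a b c h) (-T) 0 (pc_cont a b c h) ltac:(lra) PT ltac:(lra)) as [l1 [H1 E1]].
  destruct (IVT (fun x => - pc a b c h x) 0 (c/a)) as [l2 [H2 E2]].
  { apply continuity_opp, pc_cont. } { lra. } { lra. } { lra. }
  destruct (IVT (pc a b c h) (c/a) U (pc_cont a b c h)) as [l3 [H3 E3]].
  { lra. } { lra. } { lra. }
  exists l1, l2, l3.
  assert (l1 <> 0) by (intro; subst; lra).
  assert (l2 <> 0) by (intro; subst; lra).
  assert (l2 <> c / a) by (intro E; rewrite E in E2; lra).
  assert (l3 <> c / a) by (intro E; rewrite E in E3; lra).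
  repeat split; try lra.
Qed.

Definition Ef (K C1 C2 C3 l1 l2 l3 y : R) :=
  K + C1 * exp (l1 * y) + C2 * exp (l2 * y) + C3 * exp (l3 * y).

Lemma Ef_der K C1 C2 C3 l1 l2 l3 y :
  is_derive (Ef K C1 C2 C3 l1 l2 l3) y (Ef 0 (C1*l1) (C2*l2) (C3*l3) l1 l2 l3 y).
Proof. unfold Ef. auto_derive; [exact I|ring]. Qed.

Definition nu (a c h l : R) := l * (c - a * l) / h.

Lemma nu_root a b c h l : h <> 0 -> pc a b c h l = 0 ->
  b * (1 + nu a c h l) * l * l = h * nu a c h l.
Proof.
  intros hh P. unfold nu.
  assert (E : b * (1 + l * (c - a * l) / h) * l * l - h * (l * (c - a * l) / h)
              = - l * pc a b c h l / h) by (unfold pc; field; auto).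
  rewrite P in E. 
  assert (b * (1 + l * (c - a * l) / h) * l * l - h * (l * (c - a * l) / h) = 0)
    by (rewrite E; field; auto).
  lra.
Qed.

Section Expl.
Variables (L a b c h l1 l2 l3 K C1 C2 C3 : R).
Hypotheses (hh : h <> 0) (hc : c <> 0)
  (p1 : pc a b c h l1 = 0) (p2 : pc a b c h l2 = 0) (p3 : pc a b c h l3 = 0).

Let n1 := nu a c h l1.
Let n2 := nu a c h l2.
Let n3 := nu a c h l3.

Definition TfX := Ef K C1 C2 C3 l1 l2 l3.
Definition f1X := Ef 0 (C1*l1) (C2*l2) (C3*l3) l1 l2 l3.
Definition f2X := Ef 0 (C1*l1*l1) (C2*l2*l2) (C3*l3*l3) l1 l2 l3.
Definition TsX := Ef K (C1*(1+n1)) (C2*(1+n2)) (C3*(1+n3)) l1 l2 l3.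
Definition s1X := Ef 0 (C1*(1+n1)*l1) (C2*(1+n2)*l2) (C3*(1+n3)*l3) l1 l2 l3.
Definition s2X := Ef 0 (C1*(1+n1)*l1*l1) (C2*(1+n2)*l2*l2) (C3*(1+n3)*l3*l3) l1 l2 l3.

Lemma X_der y : is_derive TfX y (f1X y) /\ is_derive f1X y (f2X y) /\
   is_derive TsX y (s1X y) /\ is_derive s1X y (s2X y).
Proof. unfold TfX, f1X, f2X, TsX, s1X, s2X. refine (conj _ (conj _ (conj _ _))); apply Ef_der. Qed.

Lemma X_ode y : - a * f2X y + c * f1X y = h * (TsX y - TfX y) /\
                b * s2X y = h * (TsX y - TfX y).
Proof.
  unfold TfX, f1X, f2X, TsX, s1X, s2X, Ef. split.
  - unfold n1, n2, n3, nu. field. auto.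
  - pose proof (nu_root a b c h l1 hh p1) as R1.
    pose proof (nu_root a b c h l2 hh p2) as R2.
    pose proof (nu_root a b c h l3 hh p3) as R3.
    fold n1 in R1. fold n2 in R2. fold n3 in R3.
    transitivity (C1 * exp (l1 * y) * (b * (1 + n1) * l1 * l1) + C2 * exp (l2 * y) * (b * (1 + n2) * l2 * l2)
                  + C3 * exp (l3 * y) * (b * (1 + n3) * l3 * l3)); [ring|].
    rewrite R1, R2, R3. ring.
Qed.

Hypothesis HD0 : C1 * n1 + C2 * n2 + C3 * n3 = 0.
Hypothesis HS : C1 * exp (l1 * L) * (l1 * l1) + C2 * exp (l2 * L) * (l2 * l2)
                + C3 * exp (l3 * L) * (l3 * l3) = 0.

Lemma X_bc0 : TfX 0 = TsX 0.
Proof.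
  unfold TfX, TsX, Ef. rewrite !Rmult_0_r, exp_0. lra.
Qed.

Lemma X_bcL : f1X L = h / c * (TsX L - TfX L).
Proof.
  unfold TfX, TsX, f1X, Ef.
  assert (E : (0 + C1 * l1 * exp (l1 * L) + C2 * l2 * exp (l2 * L) + C3 * l3 * exp (l3 * L)) -
    h / c * (K + C1 * (1 + n1) * exp (l1 * L) + C2 * (1 + n2) * exp (l2 * L) + C3 * (1 + n3) * exp (l3 * L) -
       (K + C1 * exp (l1 * L) + C2 * exp (l2 * L) + C3 * exp (l3 * L)))
    = a / c * (C1 * exp (l1 * L) * (l1 * l1) + C2 * exp (l2 * L) * (l2 * l2)
                + C3 * exp (l3 * L) * (l3 * l3))).
  { unfold n1, n2, n3, nu. field. auto. }
  rewrite HS in E. lra.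
Qed.

Lemma X_pkg L' : L' = L -> pkg L a b c h (b * s1X L + c * (TsX L - TfX L)) TfX f1X f2X TsX s1X s2X.
Proof.
  intros ->.
  split; [|split; [|split; [|split]]].
  - intros y _. apply X_der.
  - intros y _. apply X_ode.
  - apply X_bc0.
  - ring.
  - apply X_bcL.
Qed.

End Expl.

Lemma const_der f x l L f0 : is_derive f x l -> 0 < x < L ->
  (forall t, 0 <= t <= L -> f t = f0) -> l = 0.
Proof.
  intros H Hx Hc.
  destruct (total_order_T l 0) as [[Hlt|Heq]|Hpos]; auto; exfalso.
  - destruct (sign_neg _ _ _ H Hlt) as [d [Hd Hs]].
    set (t := Rmin d (L - x) / 2).
    assert (0 < Rmin d (L - x)) by (apply Rmin_pos; lra).
    assert (Rmin d (L - x) <= d) by apply Rmin_l.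
    assert (Rmin d (L - x) <= L - x) by apply Rmin_r.
    destruct (Hs t ltac:(unfold t; lra)) as [Hs1 _].
    rewrite (Hc x ltac:(lra)), (Hc (x + t) ltac:(unfold t; lra)) in Hs1. lra.
  - destruct (sign_pos _ _ _ H Hpos) as [d [Hd Hs]].
    set (t := Rmin d (L - x) / 2).
    assert (0 < Rmin d (L - x)) by (apply Rmin_pos; lra).
    assert (Rmin d (L - x) <= d) by apply Rmin_l.
    assert (Rmin d (L - x) <= L - x) by apply Rmin_r.
    destruct (Hs t ltac:(unfold t; lra)) as [Hs1 _].
    rewrite (Hc x ltac:(lra)), (Hc (x + t) ltac:(unfold t; lra)) in Hs1. lra.
Qed.

Lemma alg a c h l1 l2 l3 x1 x2 x3 : h <> 0 -> a <> 0 -> l3 <> 0 -> l3 <> l1 -> l3 <> l2 ->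
  x1 * l1 + x2 * l2 + x3 * l3 = 0 ->
  x1 * (1 + nu a c h l1) * l1 + x2 * (1 + nu a c h l2) * l2 + x3 * (1 + nu a c h l3) * l3 = 0 ->
  x1 * nu a c h l1 + x2 * nu a c h l2 + x3 * nu a c h l3 = 0 ->
  x3 = 0.
Proof.
  intros hh ha n3 d1 d2 A1 A2 A3. unfold nu in *.
  set (z1 := x1 * l1). set (z2 := x2 * l2). set (z3 := x3 * l3).
  assert (S0 : z1 + z2 + z3 = 0) by (unfold z1, z2, z3; lra).
  assert (S1' : z1 * (c - a * l1) + z2 * (c - a * l2) + z3 * (c - a * l3) = 0).
  { transitivity (h * (x1 * (l1 * (c - a * l1) / h) + x2 * (l2 * (c - a * l2) / h) + x3 * (l3 * (c - a * l3) / h))).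
    - unfold z1, z2, z3. field. auto.
    - rewrite A3. ring. }
  assert (S2' : z1 * l1 * (c - a * l1) + z2 * l2 * (c - a * l2) + z3 * l3 * (c - a * l3) = 0).
  { transitivity (h * ((x1 * (1 + l1 * (c - a * l1) / h) * l1 + x2 * (1 + l2 * (c - a * l2) / h) * l2 + x3 * (1 + l3 * (c - a * l3) / h) * l3) - (x1 * l1 + x2 * l2 + x3 * l3))).
    - unfold z1, z2, z3. field. auto.
    - rewrite A1, A2. ring. }
  assert (S1 : z1 * l1 + z2 * l2 + z3 * l3 = 0).
  { assert (a * (z1 * l1 + z2 * l2 + z3 * l3) = 0).
    { transitivity (c * (z1 + z2 + z3) - (z1 * (c - a * l1) + z2 * (c - a * l2) + z3 * (c - a * l3))); [ring|].
      rewrite S0, S1'. ring. }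
    destruct (Rmult_integral _ _ H); [contradiction|auto]. }
  assert (S2 : z1 * l1 * l1 + z2 * l2 * l2 + z3 * l3 * l3 = 0).
  { assert (a * (z1 * l1 * l1 + z2 * l2 * l2 + z3 * l3 * l3) = 0).
    { transitivity (c * (z1 * l1 + z2 * l2 + z3 * l3) - (z1 * l1 * (c - a * l1) + z2 * l2 * (c - a * l2) + z3 * l3 * (c - a * l3))); [ring|].
      rewrite S1, S2'. ring. }
    destruct (Rmult_integral _ _ H); [contradiction|auto]. }
  assert (Z : z3 * ((l3 - l1) * (l3 - l2)) = 0).
  { transitivity ((z1 * l1 * l1 + z2 * l2 * l2 + z3 * l3 * l3) - (l1 + l2) * (z1 * l1 + z2 * l2 + z3 * l3) + l1 * l2 * (z1 + z2 + z3)); [ring|].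
    rewrite S0, S1, S2. ring. }
  assert ((l3 - l1) * (l3 - l2) <> 0).
  { apply Rmult_integral_contrapositive_currified; lra. }
  destruct (Rmult_integral _ _ Z) as [Z3|Z3]; [|contradiction].
  unfold z3 in Z3. destruct (Rmult_integral _ _ Z3); [auto|contradiction].
Qed.

Lemma sol_of_all (L phi kf ks hv cpf mc Ac Tb qHG : R) Tf f1 f2 Ts s1 s2 :
  0 < cpf -> 0 < mc -> 0 < Ac ->
  (forall y, is_derive Tf y (f1 y) /\ is_derive f1 y (f2 y) /\
             is_derive Ts y (s1 y) /\ is_derive s1 y (s2 y)) ->
  pkg L (phi*kf) ((1-phi)*ks) (cpf*(mc/Ac)) hv qHG Tf f1 f2 Ts s1 s2 ->
  Tf 0 = Tb ->
  is_solution L phi kf ks hv cpf mc Ac Tb qHG Tf Ts.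
Proof.
  intros hcpf hmc hAc Hall [_ [Ho [H0 [H1 H2]]]] HT.
  assert (DTf : forall y, Derive Tf y = f1 y) by (intro y; apply is_derive_unique, Hall).
  assert (DTs : forall y, Derive Ts y = s1 y) by (intro y; apply is_derive_unique, Hall).
  assert (DDTf : forall y, Derive (Derive Tf) y = f2 y).
  { intro y. rewrite (Derive_ext _ _ y DTf). apply is_derive_unique, Hall. }
  assert (DDTs : forall y, Derive (Derive Ts) y = s2 y).
  { intro y. rewrite (Derive_ext _ _ y DTs). apply is_derive_unique, Hall. }
  split; [|split; [|split; [|split; [|split]]]].
  - intros y _. destruct (Hall y) as (A&B&C&D).
    refine (conj _ (conj _ (conj _ _))).
    + exists (f1 y); exact A.
    + apply (ex_derive_ext f1); [intro t; symmetry; apply DTf|]. exists (f2 y); exact B.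
    + exists (s1 y); exact C.
    + apply (ex_derive_ext s1); [intro t; symmetry; apply DTs|]. exists (s2 y); exact D.
  - intros y Hy. change (Derive_n Tf 2 y) with (Derive (Derive Tf) y).
    change (Derive_n Ts 2 y) with (Derive (Derive Ts) y).
    rewrite DDTf, DDTs, DTf. destruct (Ho y Hy) as [A B]. split; [rewrite <- A; ring|exact B].
  - exact HT.
  - congruence.
  - rewrite DTs. exact H1.
  - rewrite DTf, H2. f_equal. field. repeat split; apply Rgt_not_eq; lra.
Qed.

Lemma existence (L phi kf ks hv cpf mc Ac Tb qHG : R)
  (hL : 0 < L) (hphi : 0 < phi < 1) (hkf : 0 < kf) (hks : 0 < ks)
  (hhv : 0 < hv) (hcpf : 0 < cpf) (hmc : 0 < mc) (hAc : 0 < Ac) :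
  exists Tf Ts, is_solution L phi kf ks hv cpf mc Ac Tb qHG Tf Ts.
Proof.
  set (a := phi * kf). set (b := (1 - phi) * ks). set (c := cpf * (mc / Ac)). set (h := hv).
  assert (ha : 0 < a) by (unfold a; nra).
  assert (hb : 0 < b) by (unfold b; nra).
  assert (hc : 0 < c) by (unfold c; apply Rmult_lt_0_compat; [lra| apply Rdiv_lt_0_compat; lra]).
  assert (hh : 0 < h) by (unfold h; lra).
  assert (hh0 : h <> 0) by lra. assert (hc0 : c <> 0) by lra.
  destruct (roots a b c h ha hb hc hh) as (l1 & l2 & l3 & L1 & L2a & L2b & L3 & P1 & P2 & P3).
  assert (hca : 0 < c / a) by (apply Rdiv_lt_0_compat; lra).
  set (n1 := nu a c h l1). set (n2 := nu a c h l2). set (n3 := nu a c h l3).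
  set (s1 := exp (l1 * L) * (l1 * l1)). set (s2 := exp (l2 * L) * (l2 * l2)).
  set (s3 := exp (l3 * L) * (l3 * l3)).
  set (w1 := n2 * s3 - n3 * s2). set (w2 := n3 * s1 - n1 * s3). set (w3 := n1 * s2 - n2 * s1).
  assert (HD0w : forall t, (t * w1) * n1 + (t * w2) * n2 + (t * w3) * n3 = 0).
  { intro t. unfold w1, w2, w3. ring. }
  assert (HSw : forall t, (t * w1) * exp (l1 * L) * (l1 * l1) + (t * w2) * exp (l2 * L) * (l2 * l2)
                + (t * w3) * exp (l3 * L) * (l3 * l3) = 0).
  { intro t. transitivity (t * (w1 * s1 + w2 * s2 + w3 * s3)); [unfold s1, s2, s3; ring | unfold w1, w2, w3; ring]. }
  set (Bv := fun K t => b * s1X a c h l1 l2 l3 (t * w1) (t * w2) (t * w3) L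
       + c * (TsX a c h l1 l2 l3 K (t * w1) (t * w2) (t * w3) L - TfX l1 l2 l3 K (t * w1) (t * w2) (t * w3) L)).
  assert (Blin : forall K t, Bv K t = t * Bv 0 1).
  { intros K t. unfold Bv, s1X, TsX, TfX, Ef. ring. }
  assert (Bnz : Bv 0 1 <> 0).
  { intro B0.
    pose proof (X_pkg L a b c h l1 l2 l3 0 (1 * w1) (1 * w2) (1 * w3) hh0 hc0 P1 P2 P3 (HD0w 1) (HSw 1) L eq_refl) as P.
    fold (Bv 0 1) in P. rewrite B0 in P.
    pose proof (Zlem L a b c h hL ha hb hc hh _ _ _ _ _ _ P) as Z.
    destruct (X_der a c h l1 l2 l3 0 (1 * w1) (1 * w2) (1 * w3) (L / 2)) as (D1 & _ & D3 & _).
    assert (E1 : f1X l1 l2 l3 (1 * w1) (1 * w2) (1 * w3) (L / 2) = 0).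
    { eapply (const_der _ _ _ L); [exact D1| lra |]. intros t Ht. apply (Z t Ht). }
    assert (E3 : s1X a c h l1 l2 l3 (1 * w1) (1 * w2) (1 * w3) (L / 2) = 0).
    { eapply (const_der _ _ _ L); [exact D3| lra |]. intros t Ht. apply (Z t Ht). }
    assert (E0 : TsX a c h l1 l2 l3 0 (1 * w1) (1 * w2) (1 * w3) (L / 2) - TfX l1 l2 l3 0 (1 * w1) (1 * w2) (1 * w3) (L / 2) = 0).
    { destruct (Z (L / 2) ltac:(lra)) as [Z1 Z2]. rewrite Z1, Z2. ring. }
    unfold f1X, s1X, TsX, TfX, Ef in E1, E3, E0.
    assert (X3 : w3 * exp (l3 * (L / 2)) = 0).
    { apply (alg a c h l1 l2 l3 (w1 * exp (l1 * (L / 2))) (w2 * exp (l2 * (L / 2)))).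
      all: first [lra | rewrite <- E1; ring | rewrite <- E3; fold n1 n2 n3; ring | rewrite <- E0; fold n1 n2 n3; ring]. }
    assert (W3 : w3 = 0).
    { destruct (Rmult_integral _ _ X3) as [|X]; auto. pose proof (exp_pos (l3 * (L / 2))). lra. }
    assert (N1 : n1 < 0).
    { unfold n1, nu. assert (a * l1 < 0) by nra. 
      assert (l1 * (c - a * l1) < 0) by nra. apply Rdiv_neg_pos; assumption. }
    assert (N2 : 0 < n2).
    { unfold n2, nu. assert (a * l2 < c).
      { apply (Rmult_lt_compat_l a) in L2b; [|lra]. replace (a * (c / a)) with c in L2b by (field; lra). lra. }
      apply Rdiv_lt_0_compat; [nra|lra]. }
    assert (S1p : 0 < s1) by (unfold s1; apply Rmult_lt_0_compat; [apply exp_pos| nra]).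
    assert (S2p : 0 < s2) by (unfold s2; apply Rmult_lt_0_compat; [apply exp_pos| nra]).
    unfold w3 in W3. nra. }
  set (t := qHG / Bv 0 1).
  set (K := Tb - (t * w1 + t * w2 + t * w3)).
  pose proof (X_pkg L a b c h l1 l2 l3 K (t * w1) (t * w2) (t * w3) hh0 hc0 P1 P2 P3 (HD0w t) (HSw t) L eq_refl) as P.
  fold (Bv K t) in P. rewrite Blin in P.
  replace (t * Bv 0 1) with qHG in P by (unfold t; field; exact Bnz).
  exists (TfX l1 l2 l3 K (t * w1) (t * w2) (t * w3)), (TsX a c h l1 l2 l3 K (t * w1) (t * w2) (t * w3)).
  apply (sol_of_all L phi kf ks hv cpf mc Ac Tb qHG _ (f1X l1 l2 l3 (t * w1) (t * w2) (t * w3)) (f2X l1 l2 l3 (t * w1) (t * w2) (t * w3)) _ (s1X a c h l1 l2 l3 (t * w1) (t * w2) (t * w3)) (s2X a c h l1 l2 l3 (t * w1) (t * w2) (t * w3)) hcpf hmc hAc).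
  - intro y. apply X_der.
  - exact P.
  - unfold TfX, Ef. rewrite !Rmult_0_r, exp_0. unfold K. lra.
Qed.

Theorem proposition2 (L phi kf ks hv cpf mc Ac Tb qHG : R)
  (hL : 0 < L) (hphi : 0 < phi < 1) (hkf : 0 < kf) (hks : 0 < ks)
  (hhv : 0 < hv) (hcpf : 0 < cpf) (hmc : 0 < mc) (hAc : 0 < Ac) :
  (* (1) existence and uniqueness (uniqueness on [0, L]) *)
  ((exists Tf Ts, is_solution L phi kf ks hv cpf mc Ac Tb qHG Tf Ts) /\
   (forall Tf Ts Tf' Ts',
      is_solution L phi kf ks hv cpf mc Ac Tb qHG Tf Ts ->
      is_solution L phi kf ks hv cpf mc Ac Tb qHG Tf' Ts' ->
      forall y, 0 <= y <= L -> Tf y = Tf' y /\ Ts y = Ts' y)) /\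
  (* (2) qHG > 0 *)
  (0 < qHG -> forall Tf Ts,
      is_solution L phi kf ks hv cpf mc Ac Tb qHG Tf Ts ->
      (forall y, 0 < y <= L -> Ts y - Tf y > 0) /\
      (forall x y, 0 <= x -> x <= y -> y <= L -> Tf x <= Tf y) /\
      (forall y, 0 <= y <= L -> Tb <= Tf y) /\
      (forall x y, 0 <= x -> x <= y -> y <= L -> Ts x <= Ts y) /\
      (forall y, 0 <= y <= L -> Tb <= Ts y)) /\
  (* (3) qHG = 0 *)
  (qHG = 0 -> forall Tf Ts,
      is_solution L phi kf ks hv cpf mc Ac Tb qHG Tf Ts ->
      forall y, 0 <= y <= L -> Tf y = Tb /\ Ts y = Tb).
Proof.
  assert (ha : 0 < phi * kf) by nra.
  assert (hb : 0 < (1 - phi) * ks) by nra.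
  assert (hc : 0 < cpf * (mc / Ac)) by (apply Rmult_lt_0_compat; [lra| apply Rdiv_lt_0_compat; lra]).
  split; [split|split].
  - apply (existence L phi kf ks hv cpf mc Ac Tb qHG); auto.
  - intros Tf Ts Tf' Ts' S1 S2 y Hy.
    destruct (sol_pkg _ _ _ _ _ _ _ _ _ _ _ _ hcpf hmc hAc S1) as [P1 [A1 B1]].
    destruct (sol_pkg _ _ _ _ _ _ _ _ _ _ _ _ hcpf hmc hAc S2) as [P2 [A2 B2]].
    pose proof (pkg_sub _ _ _ _ _ _ _ _ _ _ _ _ _ _ _ _ _ _ _ P1 P2) as P.
    replace (qHG - qHG) with 0 in P by ring.
    destruct (Zlem L _ _ _ _ hL ha hb hc hhv _ _ _ _ _ _ P y Hy) as [E1 E2].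
    cbv beta in E1, E2. split; lra.
  - intros Hq Tf Ts S.
    destruct (sol_pkg _ _ _ _ _ _ _ _ _ _ _ _ hcpf hmc hAc S) as [P [A B]].
    destruct (P2lem L _ _ _ _ hL ha hb hc hhv _ _ _ _ _ _ _ Hq P) as [C1 [C2 C3]].
    split; [auto|split; [auto|split; [|split; [auto|]]]].
    + intros y Hy. rewrite <- A. apply C2; lra.
    + intros y Hy. rewrite <- B. apply C3; lra.
  - intros Hq Tf Ts S. subst qHG.
    destruct (sol_pkg _ _ _ _ _ _ _ _ _ _ _ _ hcpf hmc hAc S) as [P [A B]].
    intros y Hy.
    destruct (Zlem L _ _ _ _ hL ha hb hc hhv _ _ _ _ _ _ P y Hy) as [E1 E2].
    split; congruence.
Qed.
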